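(* Let $L \subseteq \Sigma^*$ be a commutative star-free language. Then for every $\Gamma \subseteq \Sigma$ the language $\pi_\Gamma(L)$ is commutative and star-free.
   Context: $L$ is commutative if for every $w \in L$, every word $u$ with $|u|_a = |w|_a$ for all letters $a$ also lies in $L$ ($|u|_a$ = number of occurrences of $a$ in $u$). Star-free languages over an alphabet are the smallest class containing $\{\varepsilon\}$, the full monoid and the singletons $\{a\}$, closed under Boolean operations and concatenation. For $\Gamma \subseteq \Sigma$, $\pi_\Gamma : \Sigma^* \to \Gamma^*$ is the homomorphism with $\pi_\Gamma(x) = x$ for $x \in \Gamma$ and $\pi_\Gamma(x) = \varepsilon$ otherwise, applied elementwise to languages. *)

(* Defs.v *)
From mathcomp Require Import all_boot.
Set Implicit Arguments. Unset Strict Implicit. Unset Printing Implicit Defensive.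

Definition lang (T : finType) := seq T -> Prop.

Definition commutative_lang (T : finType) (L : lang T) : Prop :=
  forall w u : seq T, L w -> (forall a : T, count_mem a u = count_mem a w) -> L u.

Inductive sfexp (T : finType) : Type :=
| SFEps
| SFFull
| SFSym of T
| SFCompl of sfexp T
| SFUnion of sfexp T & sfexp T
| SFInter of sfexp T & sfexp T
| SFCat of sfexp T & sfexp T.

Fixpoint sf_sem (T : finType) (e : sfexp T) : lang T :=
  match e with
  | SFEps => fun w => w = [::]
  | SFFull => fun _ => True
  | SFSym a => fun w => w = [:: a]
  | SFCompl e1 => fun w => ~ sf_sem e1 w
  | SFUnion e1 e2 => fun w => sf_sem e1 w \/ sf_sem e2 w
  | SFInter e1 e2 => fun w => sf_sem e1 w /\ sf_sem e2 w
  | SFCat e1 e2 => fun w => exists u v, w = u ++ v /\ sf_sem e1 u /\ sf_sem e2 v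
  end.

Definition star_free (T : finType) (L : lang T) : Prop :=
  exists e : sfexp T, forall w, L w <-> sf_sem e w.

Definition subalph (T : finType) (G : {set T}) : finType := {x : T | x \in G}.

Definition proj_word (T : finType) (G : {set T}) (w : seq T) : seq (subalph G) :=
  pmap (fun x : T => insub x) w.

Definition proj_lang (T : finType) (G : {set T}) (L : lang T) : lang (subalph G) :=
  fun u => exists w, L w /\ u = proj_word G w.
Arguments proj_lang [T] G L.
Arguments proj_word [T] G w.

(* Main.v *)
Require Import Defs.
From mathcomp Require Import all_boot.
From mathcomp Require Import zify.
From Stdlib Require Import Classical.
Set Implicit Arguments. Unset Strict Implicit. Unset Printing Implicit Defensive.

Definition aper (T : finType) (L : lang T) (n : nat) :=
  forall (x z : seq T) (a : T) m, n <= m ->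
    (L (x ++ nseq m a ++ z) <-> L (x ++ nseq m.+1 a ++ z)).

Lemma aper_mono (T : finType) (L : lang T) n n' : n <= n' -> aper L n -> aper L n'.
Proof. move=> h H x z a m hm; apply: H; lia. Qed.

Lemma aper_iter (T : finType) (L : lang T) n : aper L n ->
  forall d x z a, L (x ++ nseq (n + d) a ++ z) <-> L (x ++ nseq n a ++ z).
Proof.
move=> H; elim=> [|d IH] x z a; first by rewrite addn0.
rewrite -IH addnS; split; apply H; lia.
Qed.

Lemma cat_takeE (T : Type) (A B : seq T -> Prop) w :
  (exists k, A (take k w) /\ B (drop k w)) -> exists u v, w = u ++ v /\ A u /\ B v.
Proof. by case=> k [h1 h2]; exists (take k w), (drop k w); rewrite cat_take_drop. Qed.

Lemma cat_takeI (T : Type) (A B : seq T -> Prop) w :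
  (exists u v, w = u ++ v /\ A u /\ B v) -> exists k, A (take k w) /\ B (drop k w).
Proof.
case=> u [v [-> [h1 h2]]]; exists (size u).
by rewrite take_size_cat // drop_size_cat.
Qed.

Lemma split3 (T : Type) (x z : seq T) a m k :
  (take k (x ++ nseq m a ++ z) = take k x /\
   drop k (x ++ nseq m a ++ z) = drop k x ++ nseq m a ++ z)
  \/ (exists i j, i + j = m /\ take k (x ++ nseq m a ++ z) = x ++ nseq i a /\
        drop k (x ++ nseq m a ++ z) = nseq j a ++ z)
  \/ (exists k', take k (x ++ nseq m a ++ z) = x ++ nseq m a ++ take k' z /\
        drop k (x ++ nseq m a ++ z) = drop k' z).
Proof.
case: (leqP k (size x)) => hk.
  left; split; first exact: takel_cat.
  have e : x = take k x ++ drop k x by rewrite cat_take_drop.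
  rewrite {1}e -catA drop_size_cat //; rewrite size_take; case: ltnP => //; lia.
case: (leqP k (size x + m)) => hk2.
  right; left; exists (k - size x), (m - (k - size x)); split; first lia.
  have e : x ++ nseq m a ++ z = (x ++ nseq (k - size x) a) ++ (nseq (m - (k - size x)) a ++ z).
    rewrite -catA; congr (x ++ _); rewrite catA -nseqD; congr (nseq _ _ ++ _); lia.
  rewrite e take_size_cat ?drop_size_cat // size_cat size_nseq; lia.
right; right; exists (k - size x - m).
have e : x ++ nseq m a ++ z = (x ++ nseq m a) ++ z by rewrite catA.
rewrite e take_cat drop_cat size_cat size_nseq ltnNge (ltnW hk2) /= -catA.
by rewrite subnDA.
Qed.

Lemma aper_cat (T : finType) (L1 L2 : lang T) n1 n2 : aper L1 n1 -> aper L2 n2 ->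
  aper (fun w => exists u v, w = u ++ v /\ L1 u /\ L2 v) (n1 + n2).
Proof.
move=> H1 H2 x z a m hm; split => /cat_takeI [k [h1 h2]].
- case: (split3 x z a m k) => [[e1 e2]|[[i [j [hij [e1 e2]]]]|[k' [e1 e2]]]];
    rewrite e1 in h1; rewrite e2 in h2.
  + exists (take k x), (drop k x ++ nseq m.+1 a ++ z); split; first by rewrite [RHS]catA cat_take_drop.
    split=> //; apply: (proj1 (H2 _ _ _ _ _)) h2; lia.
  + case: (leqP n1 i) => hi.
    * exists (x ++ nseq i.+1 a), (nseq j a ++ z); split.
        by rewrite -catA; congr (x ++ _); rewrite catA -nseqD -hij addSn.
      split=> //; have := (H1 x [::] a i hi).1; rewrite !cats0; apply; exact h1.
    * exists (x ++ nseq i a), (nseq j.+1 a ++ z); split.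
        by rewrite -catA; congr (x ++ _); rewrite catA -nseqD -hij addnS.
      split=> //; apply: (proj1 (H2 [::] _ _ _ _)) h2; lia.
  + exists (x ++ nseq m.+1 a ++ take k' z), (drop k' z); split; first by rewrite -!catA cat_take_drop.
    split=> //; apply: (proj1 (H1 _ _ _ _ _)) h1; lia.
- case: (split3 x z a m.+1 k) => [[e1 e2]|[[i [j [hij [e1 e2]]]]|[k' [e1 e2]]]];
    rewrite e1 in h1; rewrite e2 in h2; clear e1 e2.
  + exists (take k x), (drop k x ++ nseq m a ++ z); split; first by rewrite [RHS]catA cat_take_drop.
    split=> //; apply: (proj2 (H2 _ _ _ _ _)) h2; lia.
  + case: (ltnP n1 i) => hi.
    * case: i hij hi h1 => [|i] hij hi h1; first by [].
      exists (x ++ nseq i a), (nseq j a ++ z); split.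
        by rewrite -catA; congr (x ++ _); rewrite catA -nseqD; move: hij; rewrite addSn => -[->].
      split=> //; have := (H1 x [::] a i _).2; rewrite !cats0; apply; [lia|exact h1].
    * case: j hij h2 => [|j] hij h2; first lia.
      exists (x ++ nseq i a), (nseq j a ++ z); split.
        by rewrite -catA; congr (x ++ _); rewrite catA -nseqD; move: hij; rewrite addnS => -[->].
      split=> //; apply: (proj2 (H2 [::] _ _ _ _)) h2; lia.
  + exists (x ++ nseq m a ++ take k' z), (drop k' z); split; first by rewrite -!catA cat_take_drop.
    split=> //; apply: (proj2 (H1 _ _ _ _ _)) h1; lia.
Qed.

Lemma aper_sf (T : finType) (e : sfexp T) : exists n, aper (sf_sem e) n.
Proof.
elim: e => /=.
- exists 1 => x z a m hm; split=> /(f_equal size); rewrite !size_cat size_nseq /=; lia.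
- by exists 0.
- move=> b; exists 2 => x z a m hm; split=> /(f_equal size); rewrite !size_cat size_nseq /=; lia.
- move=> e [n H]; exists n => x z a m hm; have h := H x z a m hm; tauto.
- move=> e1 [n1 H1] e2 [n2 H2]; exists (n1 + n2) => x z a m hm.
  have h1 := H1 x z a m ltac:(lia); have h2 := H2 x z a m ltac:(lia); tauto.
- move=> e1 [n1 H1] e2 [n2 H2]; exists (n1 + n2) => x z a m hm.
  have h1 := H1 x z a m ltac:(lia); have h2 := H2 x z a m ltac:(lia); tauto.
- move=> e1 [n1 H1] e2 [n2 H2]; exists (n1 + n2); exact: aper_cat.
Qed.

Definition build (T : finType) (f : T -> nat) : seq T :=
  flatten [seq nseq (f a) a | a <- enum T].

Lemma count_build (T : finType) (f : T -> nat) b : count_mem b (build f) = f b.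
Proof.
rewrite /build count_flatten -map_comp sumnE big_map big_enum /=.
rewrite (bigD1 b) //= big1 /=.
  rewrite count_nseq /=; case: eqP => // _; lia.
by move=> i hi; rewrite count_nseq /=; case: eqP => // e; rewrite e eqxx in hi.
Qed.

Lemma aper_cap (T : finType) (L : lang T) n : aper L n ->
  forall x z a p q, minn p n = minn q n ->
  (L (x ++ nseq p a ++ z) <-> L (x ++ nseq q a ++ z)).
Proof.
move=> H x z a p q e.
case: (ltnP p n) => hp.
  have -> : q = p by lia. done.
case: (ltnP q n) => hq; first lia.
have -> : p = n + (p - n) by lia.
have -> : q = n + (q - n) by lia.
by rewrite !aper_iter.
Qed.

Lemma aper_build (T : finType) (L : lang T) n : aper L n ->
  forall (s : seq T) x (f g : T -> nat), (forall a, minn (f a) n = minn (g a) n) ->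
  (L (x ++ flatten [seq nseq (f a) a | a <- s]) <-> L (x ++ flatten [seq nseq (g a) a | a <- s])).
Proof.
move=> H; elim=> [|a s IH] x f g hfg //=.
rewrite (aper_cap H x _ a (hfg a)) !catA; exact: IH.
Qed.

Lemma lemmaA (T : finType) (L : lang T) n : commutative_lang L -> aper L n ->
  forall w w', (forall a, minn (count_mem a w) n = minn (count_mem a w') n) -> L w -> L w'.
Proof.
move=> C H w w' e Lw.
have h1 : L (build (fun a => count_mem a w)).
  by apply: (C w) => // a; rewrite count_build.
have h2 : L (build (fun a => count_mem a w')).
  have := aper_build H (enum T) [::] (f := fun a => count_mem a w) (g := fun a => count_mem a w') e.
  by rewrite /build /= => <-.
by apply: (C _ _ h2) => a; rewrite count_build.
Qed.

Lemma count_proj (T : finType) (G : {set T}) (c : subalph G) w :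
  count_mem c (proj_word G w) = count_mem (val c) w.
Proof.
elim: w => [|x w IH] //=; rewrite /proj_word /=.
case: insubP => [y hx <-|hx] /=; rewrite -/(proj_word G w) IH.
  by congr (_ + _); rewrite (inj_eq val_inj).
case: eqP => // e; move: hx; by rewrite e (svalP c).
Qed.

Lemma count_mapval (T : finType) (G : {set T}) (c : subalph G) (u : seq (subalph G)) :
  count_mem (val c) (map val u) = count_mem c u.
Proof. by rewrite count_map; apply: eq_count => y /=; rewrite (inj_eq val_inj). Qed.

Lemma count_mapval_out (T : finType) (G : {set T}) c (u : seq (subalph G)) :
  c \notin G -> count_mem c (map val u) = 0.
Proof.
move=> hc; elim: u => [|y u IH] //=; rewrite IH addn0.
case: eqP => // e; move: hc; rewrite -e (valP y) //.
Qed.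

Definition lift (T : finType) (G : {set T}) (u : seq (subalph G)) (w : seq T) :=
  map val u ++ [seq x <- w | x \notin G].

Lemma proj_lift (T : finType) (G : {set T}) u w : proj_word G (lift u w) = u.
Proof.
rewrite /proj_word /lift pmap_cat (map_pK valK).
suff -> : pmap insub [seq x <- w | x \notin G] = [::] :> seq (subalph G) by rewrite cats0.
elim: w => [|x w IH] //=; case: ifP => hx //=; by rewrite insubN ?hx.
Qed.

Lemma count_lift (T : finType) (G : {set T}) u w (c : T) :
  (forall hc : c \in G, count_mem c (lift u w) = count_mem (Sub c hc : subalph G) u /\
      count_mem c w = count_mem (Sub c hc : subalph G) (proj_word G w)) /\
  (c \notin G -> count_mem c (lift u w) = count_mem c w).
Proof.
split.
  move=> hc; rewrite count_proj /lift count_cat.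
  have -> : count_mem c [seq x <- w | x \notin G] = 0.
    rewrite count_filter; apply/eqP; rewrite -leqn0 leqNgt -has_count; apply/hasPn => x _ /=.
    by apply/negP => /andP [/eqP -> ]; rewrite hc.
  by rewrite addn0 -(count_mapval (Sub c hc : subalph G)) SubK.
move=> hc; rewrite /lift count_cat count_mapval_out // add0n count_filter.
apply: eq_count => x /=; case: eqP => // ->; by rewrite hc.
Qed.

Fixpoint sfge (T : finType) (b : T) (k : nat) : sfexp T :=
  match k with 0 => SFFull _ | k'.+1 => SFCat (SFFull _) (SFCat (SFSym b) (sfge b k')) end.

Lemma sfgeP (T : finType) (b : T) k u : sf_sem (sfge b k) u <-> k <= count_mem b u.
Proof.
elim: k u => [|k IH] u /=; first by [].
split.
  case=> x [y [-> [_ [p [q [-> [-> /IH h]]]]]]].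
  rewrite !count_cat /=; case: eqP => // _ /=.
  rewrite addn0 add1n addnS ltnS; exact: leq_trans h (leq_addl _ _).
elim: u => [|c u IHu] //=.
case: (eqVneq c b) => [->|ne] h.
  exists [::], (b :: u); split=> //; split=> //; exists [:: b], u; split=> //; split=> //.
  apply/IH; move: h => /=; rewrite add1n ltnS; exact.
have h' : k < count_mem b u.
  by move: h => /=; rewrite add0n.
case: (IHu h') => x [y [-> [_ hy]]].
by exists (c :: x), y.
Qed.

Lemma sf_one (T : finType) (b : T) n k : k <= n ->
  exists e, forall u, sf_sem e u <-> minn (count_mem b u) n = k.
Proof.
move=> hk; case: (ltnP k n) => hk2.
  exists (SFInter (sfge b k) (SFCompl (sfge b k.+1))) => u /=.
  split.
    case=> /sfgeP h1 h2; have h3 : ~~ (k < count_mem b u) by apply/negP => /sfgeP.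
    set c := count _ u in h1 h3 *; lia.
  move=> h; split; first by apply/sfgeP; set c := count _ u in h *; lia.
  move=> h2; have {h2} h2 := (sfgeP b k.+1 u).1 h2; set c := count _ u in h h2 *; lia.
exists (sfge b k) => u; rewrite sfgeP; set c := count _ u; lia.
Qed.

Definition cvf (T : finType) n (u : seq T) : {ffun T -> 'I_n.+1} :=
  [ffun b => inord (minn (count_mem b u) n)].

Lemma cvfP (T : finType) n (u : seq T) f :
  cvf n u = f <-> forall b, minn (count_mem b u) n = f b.
Proof.
split.
  move=> <- b; rewrite ffunE inordK // ltnS; exact: geq_minr.
move=> h; apply/ffunP => b; apply: val_inj; rewrite ffunE /= h inordK //.
Qed.

Lemma cvf_eq (T : finType) n (u u' : seq T) :
  cvf n u = cvf n u' -> forall b, minn (count_mem b u) n = minn (count_mem b u') n.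
Proof. move=> e b; have := (@cvfP _ n u (cvf n u')).1 e b; rewrite ffunE inordK // ltnS; exact: geq_minr. Qed.

Lemma sf_exact (T : finType) n (f : {ffun T -> 'I_n.+1}) :
  exists e, forall u, sf_sem e u <-> cvf n u = f.
Proof.
suff H : forall s : seq T, exists e, forall u, sf_sem e u <->
    (forall b, b \in s -> minn (count_mem b u) n = f b).
  case: (H (enum T)) => e He; exists e => u; rewrite He cvfP.
  split=> h b; [exact: (h b (mem_enum _ _)) | move=> _; exact: (h b)].
elim=> [|b s [e He]].
  by exists (SFFull _).
have [e1 He1] := sf_one b (ltnSE (ltn_ord (f b))).
exists (SFInter e1 e) => u /=; rewrite He1 He; split.
  by case=> h1 h2 c; rewrite inE => /orP [/eqP ->|/h2].
move=> h; split; first by apply: h; rewrite inE eqxx.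
by move=> c hc; apply: h; rewrite inE hc orbT.
Qed.

Lemma sf_inv (T : finType) n (Q : lang T) :
  (forall u u', cvf n u = cvf n u' -> Q u -> Q u') -> star_free Q.
Proof.
move=> HQ.
suff H : forall s : seq {ffun T -> 'I_n.+1}, exists e, forall u, sf_sem e u <-> (cvf n u \in s /\ Q u).
  case: (H (enum {ffun T -> 'I_n.+1})) => e He; exists e => u; rewrite He; split => [h | [_ h]] //; split => //; exact: (mem_enum predT _).
elim=> [|f s [e He]].
  by exists (SFCompl (SFFull _)) => u /=; split=> // -[].
have [e1 He1] := sf_exact f.
case: (classic (exists u0, cvf n u0 = f /\ Q u0)) => [[u0 [h0 q0]]|hno].
  exists (SFUnion e1 e) => u /=; rewrite He1 He inE; split.
    case=> [h|[h1 h2]]; last by rewrite h1 orbT.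
    split; first by rewrite h eqxx.
    by apply: (HQ u0); rewrite // h0 h.
  case=> /orP [/eqP h|h] q; [by left | by right].
exists e => u; rewrite He inE; split; first by case=> h q; rewrite h orbT.
case=> /orP [/eqP h|h] q //; exfalso; apply: hno; by exists u.
Qed.

Theorem mainTheorem5 (Sigma : finType) (L : lang Sigma) :
  commutative_lang L -> star_free L ->
  forall Gamma : {set Sigma},
    commutative_lang (proj_lang Gamma L) /\ star_free (proj_lang Gamma L).
Proof.
move=> C [e He] G.
have [n Hn] := aper_sf e.
have HL : aper L n.
  move=> x z a m hm; have := Hn x z a m hm; have := He (x ++ nseq m a ++ z);
  have := He (x ++ nseq m.+1 a ++ z); tauto.
split.
  move=> u u' [w [Lw eu]]; subst u => hc; exists (lift u' w); split; last by rewrite proj_lift.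
  apply: (C w) => // c; case: (boolP (c \in G)) => hG.
    have [h1 h2] := (count_lift u' w c).1 hG; by rewrite h1 h2 hc.
  exact: (count_lift u' w c).2 hG.
apply: (@sf_inv _ n) => u u' hcv [w [Lw eu]]; subst u.
exists (lift u' w); split; last by rewrite proj_lift.
apply: (lemmaA C HL _ Lw) => c; case: (boolP (c \in G)) => hG.
  have [h1 h2] := (count_lift u' w c).1 hG; rewrite h1 h2; exact: cvf_eq hcv _.
by rewrite ((count_lift u' w c).2 hG).
Qed.
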